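(* The standard 2-cocycle $\alpha(A,B)=\mathrm{tr}\big(\pi([A,B])-[\pi(A),\pi(B)]\big)$ on $\overline{gl}(\infty)$ is multiplicative: for all $A,B,C\in\overline{gl}(\infty)$, $\alpha(AB,C)+\alpha(BC,A)+\alpha(CA,B)=0$.
   Context: $\overline{gl}(\infty)$ is the associative algebra (and Lie algebra under the commutator) of complex matrices $A=(a_{ij})_{i,j\in\mathbb Z}$ with finitely many nonzero diagonals, i.e. there is $r=r(A)$ with $a_{ij}=0$ whenever $|i-j|>r$, with the usual matrix product. For $A\in\overline{gl}(\infty)$, $\pi(A)$ is the matrix with entries $\pi(A)_{ij}=a_{ij}$ if $i\ge0$ and $j\ge0$, and $0$ otherwise. The matrix $\pi([A,B])-[\pi(A),\pi(B)]$ has finitely many nonzero entries, so its trace is defined. *)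

(* Defs.v *)
From HB Require Import structures.
From mathcomp Require Import all_boot all_order all_algebra.
From mathcomp Require Import boolp classical_sets fsbigop reals.
From mathcomp Require Import complex.
Set Implicit Arguments. Unset Strict Implicit. Unset Printing Implicit Defensive.
Import Order.TTheory GRing.Theory Num.Theory.
Local Open Scope classical_set_scope.
Local Open Scope ring_scope.

Definition zmat (R : realType) := int -> int -> R[i].

(* A belongs to gl-bar(infinity): finitely many nonzero diagonals. *)
Definition in_glbar (R : realType) (A : zmat R) : Prop :=
  exists r : nat, forall i j : int, (r < `|i - j|)%N -> A i j = 0.

(* Usual matrix product: (AB)_{ij} = sum_k a_{ik} b_{kj}, the sum being over
   the (finite, for banded A B) support of k |-> a_{ik} b_{kj}. *)
Definition zmul (R : realType) (A B : zmat R) : zmat R :=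
  fun i j => \sum_(k \in [set: int]) (A i k * B k j).

Definition zsub (R : realType) (A B : zmat R) : zmat R := fun i j => A i j - B i j.

Definition zcomm (R : realType) (A B : zmat R) : zmat R :=
  zsub (zmul A B) (zmul B A).

Definition zpi (R : realType) (A : zmat R) : zmat R :=
  fun i j => if (0 <= i) && (0 <= j) then A i j else 0.

Definition ztr (R : realType) (M : zmat R) : R[i] :=
  \sum_(i \in [set: int]) M i i.

Definition alpha (R : realType) (A B : zmat R) : R[i] :=
  ztr (zsub (zpi (zcomm A B)) (zcomm (zpi A) (zpi B))).

(* Main.v *)
Require Import Defs.
From HB Require Import structures.
From mathcomp Require Import all_boot all_order all_algebra.
From mathcomp Require Import boolp classical_sets fsbigop reals.
From mathcomp Require Import complex.
From mathcomp Require Import zify ring.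
Import Order.TTheory GRing.Theory Num.Theory.
Local Open Scope ring_scope.

Definition win (a : int) (n : nat) : seq int := [seq a + (i%:Z) | i <- iota 0 n].

Lemma mem_win a n k : (k \in win a n) = (a <= k < a + n%:Z).
Proof.
apply/idP/idP.
  by case/mapP => i; rewrite mem_iota => /andP[_ hi] ->; lia.
move=> /andP[h1 h2]; apply/mapP; exists `|k - a|%N; last by lia.
rewrite mem_iota; lia.
Qed.

Lemma uniq_win a n : uniq (win a n).
Proof.
rewrite map_inj_uniq ?iota_uniq // => i j /= h; lia.
Qed.

Lemma fsum_seq (R : realType) (F : int -> R[i]) (s : seq int) :
  uniq s -> (forall k, F k != 0 -> k \in s) ->
  \sum_(k \in [set: int]) F k = \sum_(k <- s) F k.
Proof.
move=> us hs; rewrite (fsbig_seq _ _ us); apply/esym/fsbig_widen => // k [_ /=] nk.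
by apply/eqP; apply: contraT => /hs.
Qed.
Arguments fsum_seq {R}.

Lemma fsum_near (R : realType) (F : int -> R[i]) (i : int) (s : nat) :
  (forall k, F k != 0 -> (`|i - k| <= s)%N) ->
  \sum_(k \in [set: int]) F k = \sum_(k <- win (i - s%:Z) (2 * s + 1)) F k.
Proof.
move=> hF; apply: fsum_seq; first exact: uniq_win.
move=> k /hF; rewrite mem_win; lia.
Qed.
Arguments fsum_near {R}.
Definition band (R : realType) (X : zmat R) (r : nat) :=
  forall i j : int, (r < `|i - j|)%N -> X i j = 0.

Arguments band {R}.

Lemma band_mono (R : realType) (X : zmat R) r r' : band X r -> (r <= r')%N -> band X r'.
Proof. move=> h le i j hij; apply: h; lia. Qed.

Lemma zmul_band (R : realType) (X Y : zmat R) rx ry :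
  band X rx -> band Y ry -> band (zmul X Y) (rx + ry).
Proof.
move=> hX hY i j hij; rewrite /zmul fsbig1 // => k _.
have [hk|hk] := leqP `|i - k| rx.
  by rewrite (hY k j) ?mulr0 //; lia.
by rewrite hX ?mul0r.
Qed.

Definition W (s : nat) := win (- (2 * s)%:Z) (4 * s).

Lemma zmul_win (R : realType) (X Y : zmat R) s i j : band X s ->
  - (s%:Z) <= i < s%:Z -> zmul X Y i j = \sum_(k <- W s) X i k * Y k j.
Proof.
move=> hX hi; rewrite /zmul; apply: fsum_seq; first exact: uniq_win.
move=> k; rewrite mem_win; apply: contraR => hk.
by rewrite hX ?mul0r //; lia.
Qed.
Definition fW (R : realType) s (X Y : zmat R) : R[i] :=
  \sum_(i <- W s) \sum_(k <- W s)
     (if (0 <= i) && (k < 0) then X i k * Y k i else 0).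

Arguments fW {R}.

Lemma alpha_W (R : realType) (X Y : zmat R) s : band X s -> band Y s ->
  alpha X Y = fW s X Y - fW s Y X.
Proof.
move=> hX hY.
pose h i := if 0 <= i then \sum_(k <- W s)
   (if k < 0 then X i k * Y k i - Y i k * X k i else 0) else 0.
have step1 : forall i, zsub (zpi (zcomm X Y)) (zcomm (zpi X) (zpi Y)) i i = h i.
  move=> i; rewrite /zsub /zpi /zcomm /zsub /zmul /h.
  case: (boolP (0 <= i)) => hi /=; last first.
    rewrite !fsbig1 ?subrr // => k _; by rewrite mul0r.

  rewrite !(fsum_near _ i s); first last.
  1-4: move=> k; case: (leqP `|i - k| s) => // hk.
  1-4: rewrite ?(hX i k) ?(hY i k) ?if_same ?mulr0 ?mul0r ?eqxx //; lia.
  rewrite -!sumrB.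
  set Gk := fun k => if k < 0 then X i k * Y k i - Y i k * X k i else 0.
  have suppG : forall k, Gk k != 0 -> (k < 0) && (`|i - k| <= s)%N.
    move=> k; rewrite /Gk; case kn: (k < 0) => /=; last by rewrite eqxx.
    case: (leqP `|i - k| s) => // hk.
    by rewrite hX ?hY ?mulr0 ?mul0r ?subrr ?eqxx //; lia.
  transitivity (\sum_(k <- win (i - s%:Z) (2 * s + 1)) Gk k).
    apply: eq_bigr => k _; rewrite /Gk ltNge; case: (0 <= k) => /=; ring.
  rewrite -(fsum_seq Gk (win (i - s%:Z) (2 * s + 1)) (uniq_win _ _)); last first.
    by move=> k /suppG; rewrite mem_win; lia.
  apply: fsum_seq; first exact: uniq_win.
  by move=> k /suppG; rewrite mem_win; lia.
rewrite /alpha /ztr (@eq_fsbigr _ _ _ _ _ h); last by move=> i _; exact: step1.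
rewrite (fsum_seq _ (W s) (uniq_win _ _)); last first.
  move=> i; apply: contraR; rewrite mem_win => hi; rewrite /h.
  case: ifP => // i0; rewrite big1 // => k _; case: ifP => // k0.
  by rewrite hX ?hY ?mulr0 ?mul0r ?subrr //; lia.
rewrite /fW -sumrB; apply: eq_bigr => i _; rewrite /h.
case: ifP => i0 /=; last by rewrite !big1 ?subrr.
by rewrite -sumrB; apply: eq_bigr => k _; case: ifP => //; rewrite subrr.
Qed.

Definition T (R : realType) s (F : int -> int -> int -> R[i]) : R[i] :=
  \sum_(x <- W s) \sum_(y <- W s) \sum_(z <- W s) F x y z.
Arguments T {R}.

Definition Lf (R : realType) s (X Y Z : zmat R) :=
  T s (fun i k j => if (0 <= i) && (k < 0) then X i j * Y j k * Z k i else 0).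
Definition Rf (R : realType) s (Z X Y : zmat R) :=
  T s (fun i k j => if (0 <= i) && (k < 0) then Z i k * X k j * Y j i else 0).
Arguments Lf {R}. Arguments Rf {R}.

Lemma fW_mulL (R : realType) (X Y Z : zmat R) s :
  band X s -> band Z s -> fW s (zmul X Y) Z = Lf s X Y Z.
Proof.
move=> hX hZ; rewrite /fW /Lf /T; apply: eq_bigr => i _; apply: eq_bigr => k _.
case: ifP => c; last by rewrite big1.
have [hi|hi] := ltrP i s%:Z.
  rewrite (zmul_win _ _ _ _ _ _ hX); last by move: c; lia.
  by rewrite big_distrl.
rewrite (hZ k i) ?mulr0 ?big1 // => [j _|]; [by rewrite mulr0 | by move: c; lia].
Qed.

Lemma fW_mulR (R : realType) (X Y Z : zmat R) s :
  band X s -> band Z s -> fW s Z (zmul X Y) = Rf s Z X Y.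
Proof.
move=> hX hZ; rewrite /fW /Rf /T; apply: eq_bigr => i _; apply: eq_bigr => k _.
case: ifP => c; last by rewrite big1.
have [ks|ks] := ltrP k (- s%:Z).
  rewrite (hZ i k) ?mul0r ?big1 // => [j _|]; [by rewrite !mul0r | by move: c; lia].
rewrite (zmul_win _ _ _ _ _ _ hX); last by move: c; lia.
rewrite big_distrr; apply: eq_bigr => j _.
by rewrite /= mulrA.
Qed.

Lemma T12 (R : realType) s (F : int -> int -> int -> R[i]) :
  T s F = T s (fun x y z => F y x z).
Proof. by rewrite /T exchange_big. Qed.

Lemma T23 (R : realType) s (F : int -> int -> int -> R[i]) :
  T s F = T s (fun x y z => F x z y).
Proof. by rewrite /T; apply: eq_bigr => x _; rewrite exchange_big. Qed.

Lemma Teq (R : realType) s (F G : int -> int -> int -> R[i]) :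
  (forall x y z, F x y z = G x y z) -> T s F = T s G.
Proof.
move=> h; rewrite /T; apply: eq_bigr => x _; apply: eq_bigr => y _;
  apply: eq_bigr => z _; exact: h.
Qed.

Lemma TB (R : realType) s (F G : int -> int -> int -> R[i]) :
  T s F - T s G = T s (fun x y z => F x y z - G x y z).
Proof.
rewrite /T -sumrB; apply: eq_bigr => x _; rewrite -sumrB; apply: eq_bigr => y _.
by rewrite -sumrB.
Qed.

Lemma TD (R : realType) s (F G : int -> int -> int -> R[i]) :
  T s F + T s G = T s (fun x y z => F x y z + G x y z).
Proof.
rewrite /T -big_split; apply: eq_bigr => x _; rewrite -big_split; apply: eq_bigr => y _.
by rewrite -big_split.
Qed.

Lemma T0 (R : realType) s (F : int -> int -> int -> R[i]) :
  (forall x y z, F x y z = 0) -> T s F = 0.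
Proof.
move=> h; rewrite /T; apply: big1 => x _; apply: big1 => y _; apply: big1 => z _.
exact: h.
Qed.

Section canon.
Variables (R : realType) (s : nat) (A B C : zmat R).
Let K (c : int -> int -> int -> bool) :=
  T s (fun p q r => if c p q r then A p q * B q r * C r p else 0).

Lemma E1 : Lf s A B C = K (fun p q r => (0 <= p) && (r < 0)).
Proof.
rewrite /Lf /K [LHS]T23; apply: Teq => x y z; by case: ifP.
Qed.
Lemma E3 : Lf s B C A = K (fun p q r => (0 <= q) && (p < 0)).
Proof.
rewrite /Lf /K [LHS]T12; apply: Teq => x y z; case: ifP => // _; ring.
Qed.
Lemma E5 : Lf s C A B = K (fun p q r => (0 <= r) && (q < 0)).
Proof.
rewrite /Lf /K [LHS]T12 [LHS]T23 [LHS]T12; apply: Teq => x y z; case: ifP => // _; ring.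
Qed.
Lemma E2 : Rf s C A B = K (fun p q r => (0 <= r) && (p < 0)).
Proof.
rewrite /Rf /K [LHS]T12 [LHS]T23; apply: Teq => x y z; case: ifP => // _; ring.
Qed.
Lemma E4 : Rf s A B C = K (fun p q r => (0 <= p) && (q < 0)).
Proof. by []. Qed.
Lemma E6 : Rf s B C A = K (fun p q r => (0 <= q) && (r < 0)).
Proof.
rewrite /Rf /K [LHS]T23 [LHS]T12; apply: Teq => x y z; case: ifP => // _; ring.
Qed.
End canon.

Theorem mainTheorem17 (R : realType) (A B C : zmat R) :
  in_glbar A -> in_glbar B -> in_glbar C ->
  alpha (zmul A B) C + alpha (zmul B C) A + alpha (zmul C A) B = 0.
Proof.
move=> [ra hA] [rb hB] [rc hC].
set s := (ra + rb + rc)%N.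
have bA : band A s by apply: (band_mono _ _ _ _ hA); lia.
have bB : band B s by apply: (band_mono _ _ _ _ hB); lia.
have bC : band C s by apply: (band_mono _ _ _ _ hC); lia.
have bAB : band (zmul A B) s by apply: (band_mono _ _ _ _ (zmul_band _ _ _ _ _ hA hB)); lia.
have bBC : band (zmul B C) s by apply: (band_mono _ _ _ _ (zmul_band _ _ _ _ _ hB hC)); lia.
have bCA : band (zmul C A) s by apply: (band_mono _ _ _ _ (zmul_band _ _ _ _ _ hC hA)); lia.
rewrite (alpha_W _ _ _ _ bAB bC) (alpha_W _ _ _ _ bBC bA) (alpha_W _ _ _ _ bCA bB).
rewrite (fW_mulL _ _ _ _ _ bA bC) (fW_mulR _ _ _ _ _ bA bC) (fW_mulL _ _ _ _ _ bB bA) (fW_mulR _ _ _ _ _ bB bA).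
rewrite (fW_mulL _ _ _ _ _ bC bB) (fW_mulR _ _ _ _ _ bC bB).
rewrite E1 E2 E3 E4 E5 E6 !TB !TD; apply: T0 => p q r.
rewrite !ltNge; case: (0 <= p); case: (0 <= q); case: (0 <= r) => /=; ring.
Qed.
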